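(* Let $S\ni h$ be a polarized lattice, $\Delta$ a Weyl chamber for $\operatorname{rt}(S,h)$, $e_1,e_2\in\mathfrak{b}(\Delta)$ distinct exceptional divisors, and $l_1,l_2\in\operatorname{Fn}_\Delta(S,h)$ distinct lines. Then: (1) if $S\ni h$ is $2$-admissible, then $l_1\cdot l_2\in\{0,1\}$; (2) if $S\ni h$ is $1$-admissible, then $l_1\cdot e_1\in\{0,1\}$; (3) always $e_1\cdot e_2\in\{0,1\}$.
   Context: All lattices even; $(S,h)$ polarized means $S$ hyperbolic, $h^2>0$. $\operatorname{root}_n(S,h)=\{r: r^2=-2,\ r\cdot h=n\}$; $\operatorname{rt}(S,h)$ is spanned by $\operatorname{root}_0(S,h)$. A Weyl chamber $\Delta$ has positive roots $P_\Delta$ and simple roots $\mathfrak{b}(\Delta)$ (exceptional divisors). Lines: $\operatorname{Fn}_\Delta(S,h)=\{l\in\operatorname{root}_1(S,h): l\cdot e\ge0\ \forall e\in\mathfrak{b}(\Delta)\}$. A vector $w$ is $m$-isotropic if $w^2=0$, $w\cdot h=m$. $S\ni h$ is $1$-admissible if it has no $1$-isotropic vector, and $2$-admissible if $h^2\ge4$ and it has neither $1$- nor $2$-isotropic vectors. *)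

(* Defs.v *)
From HB Require Import structures.
From mathcomp Require Import all_boot all_order all_algebra.
Set Implicit Arguments. Unset Strict Implicit. Unset Printing Implicit Defensive.
Import Order.TTheory GRing.Theory Num.Theory.
Local Open Scope ring_scope.

(* A lattice of rank n is Z^n (row vectors 'rV[int]_n) with the bilinear bform
   given by an integral Gram matrix G:  x.y = x G y^T. *)
Definition bform (n : nat) (G : 'M[int]_n) (x y : 'rV[int]_n) : int :=
  (x *m G *m y^T) ord0 ord0.

Definition bformQ (n : nat) (G : 'M[int]_n) (x : 'rV[rat]_n) (y : 'rV[int]_n) : rat :=
  (x *m map_mx intr G *m (map_mx intr y)^T) ord0 ord0.

(* even lattice: symmetric integral bform with even diagonal (x^2 even for all x) *)
Definition even_lattice (n : nat) (G : 'M[int]_n) : Prop :=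
  G^T = G /\ forall i : 'I_n, (2 %| G i i)%Z.

(* hyperbolic: nondegenerate of signature (1, n-1) (Sylvester diagonalisation
   over Q: some invertible rational base change gives diag(+,-,...,-)). *)
Definition hyperbolic (n : nat) (G : 'M[int]_n) : Prop :=
  (0 < n)%N /\
  exists P : 'M[rat]_n, P \in unitmx /\
    let D := P *m map_mx intr G *m P^T in
    (forall i j : 'I_n, i != j -> D i j = 0) /\
    (forall i : 'I_n, ((nat_of_ord i == 0%N) -> 0 < D i i) /\
                      ((nat_of_ord i != 0%N) -> D i i < 0)).

Definition polarized (n : nat) (G : 'M[int]_n) (h : 'rV[int]_n) : Prop :=
  even_lattice G /\ hyperbolic G /\ 0 < bform G h h.

Definition is_root (n : nat) (G : 'M[int]_n) (h : 'rV[int]_n) (k : int)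
  (r : 'rV[int]_n) : Prop :=
  bform G r r = -2 /\ bform G r h = k.

(* A Weyl chamber of the root system root_0(S,h) (in rt(S,h) (x) R) is a
   connected component of the complement of the hyperplanes r^perp; it is
   represented by any rational point rho lying in it (only the pairings of
   rho with roots matter). *)
Definition weyl_chamber (n : nat) (G : 'M[int]_n) (h : 'rV[int]_n)
  (rho : 'rV[rat]_n) : Prop :=
  forall r, is_root G h 0 r -> bformQ G rho r != 0.

Definition pos_root (n : nat) (G : 'M[int]_n) (h : 'rV[int]_n)
  (rho : 'rV[rat]_n) (r : 'rV[int]_n) : Prop :=
  is_root G h 0 r /\ 0 < bformQ G rho r.

(* b(Delta): simple roots = positive roots whose hyperplane is a wall of the
   chamber, i.e. e^perp contains a point of the closure of Delta at which all
   other positive roots are strictly positive. *)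
Definition exceptional (n : nat) (G : 'M[int]_n) (h : 'rV[int]_n)
  (rho : 'rV[rat]_n) (e : 'rV[int]_n) : Prop :=
  pos_root G h rho e /\
  exists x : 'rV[rat]_n, bformQ G x e = 0 /\
    forall r, pos_root G h rho r -> r <> e -> 0 < bformQ G x r.

Definition is_line (n : nat) (G : 'M[int]_n) (h : 'rV[int]_n)
  (rho : 'rV[rat]_n) (l : 'rV[int]_n) : Prop :=
  is_root G h 1 l /\ forall e, exceptional G h rho e -> 0 <= bform G l e.

Definition isotropic (n : nat) (G : 'M[int]_n) (h : 'rV[int]_n) (m : int)
  (w : 'rV[int]_n) : Prop :=
  bform G w w = 0 /\ bform G w h = m.

Definition one_admissible (n : nat) (G : 'M[int]_n) (h : 'rV[int]_n) : Prop :=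
  forall w, ~ isotropic G h 1 w.

Definition two_admissible (n : nat) (G : 'M[int]_n) (h : 'rV[int]_n) : Prop :=
  4 <= bform G h h /\ forall w, ~ isotropic G h 1 w /\ ~ isotropic G h 2 w.

(* Main.v *)
Require Import Defs.
From mathcomp Require Import all_boot all_order all_algebra.
From Stdlib Require Import Classical.
From mathcomp Require Import ring lra zify.
Set Implicit Arguments. Unset Strict Implicit. Unset Printing Implicit Defensive.
Import Order.TTheory GRing.Theory Num.Theory.
Local Open Scope ring_scope.

Definition Bq (R : comNzRingType) (n : nat) (M : 'M[R]_n) (a b : 'rV[R]_n) : R := (a *m M *m b^T) ord0 ord0.

Lemma BqDl (R : comNzRingType) n (M : 'M[R]_n) a b c : Bq M (a + b) c = Bq M a c + Bq M b c.
Proof. by rewrite /Bq !mulmxDl mxE. Qed.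
Lemma BqZl (R : comNzRingType) n (M : 'M[R]_n) k a c : Bq M (k *: a) c = k * Bq M a c.
Proof. by rewrite /Bq -!scalemxAl mxE. Qed.
Lemma BqNl (R : comNzRingType) n (M : 'M[R]_n) a c : Bq M (- a) c = - Bq M a c.
Proof. by rewrite -scaleN1r BqZl mulN1r. Qed.
Lemma BqBl (R : comNzRingType) n (M : 'M[R]_n) a b c : Bq M (a - b) c = Bq M a c - Bq M b c.
Proof. by rewrite BqDl BqNl. Qed.
Lemma tr11 (R : comNzRingType) (A : 'M[R]_1) : (A^T) ord0 ord0 = A ord0 ord0.
Proof. by rewrite mxE. Qed.
Lemma Bq_sym (R : comNzRingType) n (M : 'M[R]_n) a b : M^T = M -> Bq M a b = Bq M b a.
Proof.
move=> MT; rewrite /Bq -tr11.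
by rewrite !trmx_mul trmxK MT mulmxA.
Qed.
Lemma BqDr (R : comNzRingType) n (M : 'M[R]_n) a b c : M^T = M -> Bq M c (a + b) = Bq M c a + Bq M c b.
Proof. by move=> MT; rewrite !(Bq_sym c _ MT) // BqDl. Qed.
Lemma BqZr (R : comNzRingType) n (M : 'M[R]_n) k a c : M^T = M -> Bq M c (k *: a) = k * Bq M c a.
Proof. by move=> MT; rewrite !(Bq_sym c _ MT) // BqZl. Qed.
Lemma BqBr (R : comNzRingType) n (M : 'M[R]_n) a b c : M^T = M -> Bq M c (a - b) = Bq M c a - Bq M c b.
Proof. by move=> MT; rewrite !(Bq_sym c _ MT) // BqBl. Qed.

Lemma diag_expand n (M P : 'M[rat]_n) (a b : 'rV[rat]_n) :
  P \in unitmx -> (forall i j, i != j -> (P *m M *m P^T) i j = 0) ->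
  Bq M a b = \sum_i (a *m invmx P) 0 i * (P *m M *m P^T) i i * (b *m invmx P) 0 i.
Proof.
move=> Pu Dd.
have ea : a = (a *m invmx P) *m P by rewrite mulmxKV.
have eb : b = (b *m invmx P) *m P by rewrite mulmxKV.
rewrite /Bq {1}ea {1}eb trmx_mul.
set wa := a *m invmx P; set wb := b *m invmx P.
have -> : wa *m P *m M *m (P^T *m wb^T) = wa *m (P *m M *m P^T) *m wb^T by rewrite !mulmxA.
rewrite mxE; apply: eq_bigr => j _; congr (_ * _); last by rewrite mxE.
rewrite mxE (bigD1 j) //= big1 ?addr0 //.
by move=> k kj; rewrite Dd ?mulr0.
Qed.

Lemma term_le0 (d w : rat) : d < 0 -> w * d * w <= 0.
Proof. move=> dl; rewrite mulrC mulrA -expr2 mulrC; apply: mulr_le0_ge0; [exact: ltW | exact: sqr_ge0]. Qed.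

Lemma NEG n (M P : 'M[rat]_n) (i0 : 'I_n) (a : 'rV[rat]_n) :
  P \in unitmx -> (forall i j, i != j -> (P *m M *m P^T) i j = 0) ->
  (forall i, i != i0 -> (P *m M *m P^T) i i < 0) ->
  (a *m invmx P) 0 i0 = 0 ->
  Bq M a a <= 0 /\ (Bq M a a = 0 -> a = 0).
Proof.
move=> Pu Dd Dn w0.
have tle : forall i : 'I_n, (a *m invmx P) 0 i * (P *m M *m P^T) i i * (a *m invmx P) 0 i <= 0.
  move=> i; have [->|ne] := eqVneq i i0; first by rewrite w0 !mul0r.
  exact: term_le0 (Dn _ ne).
rewrite (diag_expand a a Pu Dd); split; first exact: sumr_le0.
move=> s0.
have s0' : \sum_i - ((a *m invmx P) 0 i * (P *m M *m P^T) i i * (a *m invmx P) 0 i) = 0.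
  by rewrite sumrN s0 oppr0.
have all0 : forall i, (a *m invmx P) 0 i = 0.
  move=> i; have [->//|ne] := eqVneq i i0.
  have tge : forall i : 'I_n, true -> 0 <= - ((a *m invmx P) 0 i * (P *m M *m P^T) i i * (a *m invmx P) 0 i).
    by move=> k _; rewrite oppr_ge0; apply: tle.
  have := @psumr_eq0P _ _ _ _ tge s0' i isT.
  move/eqP; rewrite oppr_eq0 mulrC mulrA mulf_eq0 => /orP[|/eqP Dz].
    by rewrite mulf_eq0 orbb => /eqP.
  by move: (Dn _ ne); rewrite Dz ltxx.
have : a *m invmx P = 0 by apply/rowP => i; rewrite all0 mxE.
by move/(congr1 (mulmx^~ P)); rewrite mulmxKV // mul0mx.
Qed.

Lemma KQ n (M P : 'M[rat]_n) (i0 : 'I_n) (h v : 'rV[rat]_n) :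
  M^T = M -> P \in unitmx -> (forall i j, i != j -> (P *m M *m P^T) i j = 0) ->
  (forall i, i != i0 -> (P *m M *m P^T) i i < 0) ->
  0 < Bq M h h -> Bq M v h = 0 ->
  Bq M v v <= 0 /\ (Bq M v v = 0 -> v = 0).
Proof.
move=> MT Pu Dd Dn hpos vh.
set u0 := (h *m invmx P) 0 i0; set s := (v *m invmx P) 0 i0.
have u0nz : u0 != 0.
  apply/eqP => u0z; have [hle _] := NEG Pu Dd Dn u0z.
  by rewrite (le_gtF hle) in hpos.
set y := u0 *: v - s *: h.
have wy : (y *m invmx P) 0 i0 = 0.
  have e : forall (k l : rat) (A B : 'rV[rat]_n) j, (k *: A - l *: B) 0 j = k * A 0 j - l * B 0 j.
    by move=> *; rewrite !mxE.
  by rewrite /y mulmxBl -!scalemxAl e -/u0 -/s mulrC subrr.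
have [yle yeq] := NEG Pu Dd Dn wy.
have By : Bq M y y = u0 ^+ 2 * Bq M v v + s ^+ 2 * Bq M h h.
  rewrite /y !(BqBl, BqZl, BqBr, BqZr) // (Bq_sym h v) // vh; ring.
have u2 : 0 < u0 ^+ 2 by rewrite exprn_even_gt0.
have s2 : 0 <= s ^+ 2 by exact: sqr_ge0.
rewrite By in yle yeq.
have vle : Bq M v v <= 0 by nra.
split => // vv0.
have s0 : s = 0.
  apply/eqP; rewrite -sqrf_eq0; apply/eqP; nra.
have y0 : y = 0 by apply: yeq; rewrite vv0 s0; ring.
by move: y0; rewrite /y s0 scale0r subr0 => /eqP; rewrite scaler_eq0 (negbTE u0nz) => /eqP.
Qed.

Notation Gq G := (map_mx (intr : int -> rat) G).
Notation vq v := (map_mx (intr : int -> rat) v).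

Lemma bformE n (G : 'M[int]_n) x y : bform G x y = Bq G x y.
Proof. by []. Qed.
Lemma bformQE n (G : 'M[int]_n) x y : bformQ G x y = Bq (Gq G) x (vq y).
Proof. by []. Qed.
Lemma bform_cast n (G : 'M[int]_n) x y :
  (bform G x y)%:~R = Bq (Gq G) (vq x) (vq y) :> rat.
Proof. by rewrite /bform /Bq map_trmx -!map_mxM [RHS]mxE. Qed.

Lemma pol_sym n (G : 'M[int]_n) h : polarized G h -> G^T = G.
Proof. by case=> [[]]. Qed.

Lemma vq_eq0 n (v : 'rV[int]_n) : vq v = 0 -> v = 0.
Proof.
move=> e; apply/rowP => j; have := congr1 (fun A : 'rV[rat]_n => A 0 j) e.
by rewrite !mxE /= => /eqP; rewrite intr_eq0 => /eqP.
Qed.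

Lemma Kint n (G : 'M[int]_n) h v : polarized G h -> bform G v h = 0 ->
  bform G v v <= 0 /\ (bform G v v = 0 -> v = 0).
Proof.
move=> pol vh; have GT := pol_sym pol.
case: pol => _ [[n0 [P [Pu [Dd Dn]]]] hh].
set i0 : 'I_n := Ordinal n0.
have Dn' : forall i, i != i0 -> (P *m Gq G *m P^T) i i < 0.
  by move=> i ne; apply: (Dn i).2; apply: contra ne => /eqP e; apply/eqP/val_inj.
have GqT : (Gq G)^T = Gq G by rewrite map_trmx GT.
have hpos : 0 < Bq (Gq G) (vq h) (vq h) by rewrite -bform_cast ltr0z.
have vh' : Bq (Gq G) (vq v) (vq h) = 0 by rewrite -bform_cast vh.
have [le eq] := KQ GqT Pu Dd Dn' hpos vh'.
split; first by rewrite -(lerz0 rat) bform_cast.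
move=> vv; apply: vq_eq0; apply: eq; by rewrite -bform_cast vv.
Qed.

Lemma bDl n (G : 'M[int]_n) a b c : bform G (a + b) c = bform G a c + bform G b c.
Proof. exact: BqDl. Qed.
Lemma bBl n (G : 'M[int]_n) a b c : bform G (a - b) c = bform G a c - bform G b c.
Proof. exact: BqBl. Qed.
Lemma bZl n (G : 'M[int]_n) k a c : bform G (k *: a) c = k * bform G a c.
Proof. exact: BqZl. Qed.
Lemma bsym n (G : 'M[int]_n) a b : G^T = G -> bform G a b = bform G b a.
Proof. exact: Bq_sym. Qed.
Lemma bDr n (G : 'M[int]_n) a b c : G^T = G -> bform G c (a + b) = bform G c a + bform G c b.
Proof. exact: BqDr. Qed.
Lemma bBr n (G : 'M[int]_n) a b c : G^T = G -> bform G c (a - b) = bform G c a - bform G c b.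
Proof. exact: BqBr. Qed.
Lemma bZr n (G : 'M[int]_n) k a c : G^T = G -> bform G c (k *: a) = k * bform G c a.
Proof. exact: BqZr. Qed.

Lemma Hodge n (G : 'M[int]_n) h v : polarized G h ->
  bform G v v * bform G h h <= bform G v h ^+ 2.
Proof.
move=> pol; have GT := pol_sym pol.
have hh : 0 < bform G h h by case: pol => _ [].
set H := bform G h h; set B := bform G v h.
set y := H *: v - B *: h.
have yh : bform G y h = 0 by rewrite /y bBl !bZl -/H -/B mulrC subrr.
have [yle _] := Kint pol yh.
have Ey : bform G y y = H * (H * bform G v v - B ^+ 2).
  rewrite /y !(bBl, bZl, bBr, bZr) // (bsym h v) // -/H -/B; ring.
rewrite Ey pmulr_rle0 // in yle.
by rewrite mulrC -subr_le0.
Qed.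

Lemma bformQ_sum n (G : 'M[int]_n) (rho : 'rV[rat]_n) r :
  bformQ G rho r = \sum_j (rho *m Gq G) ord0 j * (r ord0 j)%:~R.
Proof. by rewrite /bformQ mxE; apply: eq_bigr => j _; rewrite !mxE. Qed.

Lemma rho_int n (G : 'M[int]_n) (rho : 'rV[rat]_n) : exists N : int, 0 < N /\
  exists m : 'rV[int]_n -> int, forall r, N%:~R * bformQ G rho r = (m r)%:~R.
Proof.
set c := rho *m Gq G.
exists (\prod_j denq (c ord0 j)); split.
  by apply: prodr_gt0 => j _; exact: denq_gt0.
exists (fun r => \sum_j (\prod_(k | k != j) denq (c ord0 k)) * numq (c ord0 j) * r ord0 j).
move=> r; rewrite bformQ_sum mulr_sumr rmorph_sum; apply: eq_bigr => j _.
rewrite !rmorphM /= numqE (bigD1 j) //= rmorphM /=; ring.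
Qed.

Lemma exists_min (T : Type) (P : T -> Prop) (f : T -> nat) :
  (exists x, P x) -> exists x, P x /\ forall y, P y -> (f x <= f y)%N.
Proof.
move=> [x Px].
suff: forall k, forall x, P x -> (f x <= k)%N -> exists x, P x /\ forall y, P y -> (f x <= f y)%N.
  by move=> H; exact: (H (f x) x Px (leqnn _)).
elim=> [|k IH] z Pz.
  rewrite leqn0 => /eqP fz; exists z; split => // y _; by rewrite fz.
move=> fzk.
case: (classic (exists y, P y /\ (f y < f z)%N)) => [[y [Py lt]]|nex].
  have [le|_] := leqP (f z) k; first exact: (IH z Pz le).
  apply: (IH y Py); rewrite -ltnS; apply: leq_trans lt fzk.
exists z; split => // y Py; rewrite leqNgt; apply/negP => lt; apply: nex; exists y; by split.
Qed.

Lemma bformQ_B n (G : 'M[int]_n) (rho : 'rV[rat]_n) a b :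
  bformQ G rho (a - b) = bformQ G rho a - bformQ G rho b.
Proof.
rewrite !bformQ_sum -sumrB; apply: eq_bigr => j _; rewrite !mxE rmorphB /=; ring.
Qed.

Lemma bformQ_x n (G : 'M[int]_n) (rho : 'rV[rat]_n) t r r' :
  bformQ G (rho + t *: vq r) r' = bformQ G rho r' + t * (bform G r r')%:~R.
Proof. by rewrite !bformQE BqDl BqZl bform_cast. Qed.

Lemma bNl n (G : 'M[int]_n) a c : bform G (- a) c = - bform G a c.
Proof. exact: BqNl. Qed.
Lemma bNr n (G : 'M[int]_n) a c : G^T = G -> bform G c (- a) = - bform G c a.
Proof. by move=> GT; rewrite !(bsym c) // bNl. Qed.


Lemma bexpB n (G : 'M[int]_n) a b : G^T = G ->
  bform G (a - b) (a - b) = bform G a a - 2 * bform G a b + bform G b b.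
Proof. move=> GT; rewrite !(bBl, bBr) // (bsym b a) //; ring. Qed.
Lemma bexpD n (G : 'M[int]_n) a b : G^T = G ->
  bform G (a + b) (a + b) = bform G a a + 2 * bform G a b + bform G b b.
Proof. move=> GT; rewrite !(bDl, bDr) // (bsym b a) //; ring. Qed.


Lemma absz_contra (a b : int) : 0 < b -> 0 < a - b -> (`|a| <= `|a - b|)%N -> False.
Proof. lia. Qed.
Lemma absz_le (a b : int) : 0 < a -> 0 < b -> (`|a| <= `|b|)%N -> a <= b.
Proof. lia. Qed.
Lemma int_sub_neg (a b : int) : a < 0 -> 0 <= b -> a - b < 0.
Proof. lia. Qed.
Lemma line_pos n (G : 'M[int]_n) h rho l : polarized G h -> weyl_chamber G h rho ->
  (forall e, exceptional G h rho e -> 0 <= bform G l e) ->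
  forall r, pos_root G h rho r -> 0 <= bform G l r.
Proof.
move=> pol wc lineH r0 pr0.
have GT := pol_sym pol.
rewrite leNgt; apply/negP => neg.
have [N [Npos [m mE]]] := rho_int G rho.
pose Pp r := pos_root G h rho r /\ bform G l r < 0.
have [r [[pr lr] rmin]] := @exists_min _ Pp (fun r => `|m r|%N) (ex_intro _ r0 (conj pr0 neg)).
have Nq : 0 < (N%:~R : rat) by rewrite ltr0z.
have mpos : forall r, pos_root G h rho r -> 0 < m r.
  move=> a [_ pa]; rewrite -(ltr0z rat) -mE; exact: mulr_gt0.
have mB : forall a b, m (a - b) = m a - m b.
  move=> a b; apply: (intr_inj (R := rat)); rewrite rmorphB /= -!mE bformQ_B; ring.
have mle : forall a b, (m a <= m b) = (bformQ G rho a <= bformQ G rho b).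
  by move=> a b; rewrite -(ler_int rat) -!mE ler_pM2l.
have: 0 <= bform G l r; last by rewrite leNgt lr.
apply: lineH; split; first exact: pr.
set c := bformQ G rho r.
have cpos : 0 < c by case: pr.
have [[rr rh] _] := pr.
exists (rho + (c / 2) *: vq r); split.
  by rewrite bformQ_x -/c rr; lra.
move=> r' pr' ne; rewrite bformQ_x.
set c' := bformQ G rho r'.
have c'pos : 0 < c' by case: pr'.
have [[r'r r'h] _] := pr'.
set k := bform G r r'.
have [kpos|kneg] := lerP 0 k.
  have : (0 : rat) <= k%:~R by rewrite ler0z.
  have : 0 <= c / 2 by lra.
  move=> h1 h2; have := mulr_ge0 h1 h2; lra.
have [km1|kne] := eqVneq k (-1); last first.
  have kle : k <= -2 by lia.
  have dh : bform G (r - r') h = 0 by rewrite bBl rh r'h subrr.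
  have [dle deq] := Kint pol dh.
  have dd : bform G (r - r') (r - r') = 0.
    apply/eqP; rewrite eq_le dle /= bexpB // rr r'r -/k; lia.
  by have := deq dd => /eqP; rewrite subr_eq0 => /eqP e; case: ne.
rewrite km1.
have dr : is_root G h 0 (r' - r).
  by split; [rewrite bexpB // (bsym r' r) // -/k km1 rr r'r | rewrite bBl rh r'h subrr].
move: (wc _ dr); rewrite bformQ_B -/c -/c' neq_lt => /orP[dneg|dpos]; last by lra.
have dr' : pos_root G h rho (r - r').
  split; last by rewrite bformQ_B -/c -/c'; lra.
  by split; [rewrite bexpB // -/k km1 rr r'r | rewrite bBl rh r'h subrr].
have [l'pos|l'neg] := lerP 0 (bform G l r').
  have Pd : Pp (r - r') by split => //; rewrite bBr //; exact: int_sub_neg.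
  have := rmin _ Pd; rewrite mB.
  have := mpos _ pr'; have := mpos _ dr'; rewrite mB => h1 h2 h3.
  exfalso; exact: absz_contra h2 h1 h3.
have := rmin _ (conj pr' l'neg).
have := mpos _ pr; have := mpos _ pr' => h1 h2 h3.
have := absz_le h2 h1 h3.
rewrite mle -/c -/c' => h4; lra.
Qed.

Lemma bformQ_0 n (G : 'M[int]_n) (rho : 'rV[rat]_n) : bformQ G rho 0 = 0.
Proof. by rewrite -(subrr (0 : 'rV[int]_n)) bformQ_B subrr. Qed.
Lemma bformQ_N n (G : 'M[int]_n) (rho : 'rV[rat]_n) a : bformQ G rho (- a) = - bformQ G rho a.
Proof. by rewrite -sub0r bformQ_B bformQ_0 sub0r. Qed.

Theorem lemma2p12 (n : nat) (G : 'M[int]_n) (h : 'rV[int]_n)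
  (rho : 'rV[rat]_n) (e1 e2 l1 l2 : 'rV[int]_n) :
  polarized G h -> weyl_chamber G h rho ->
  exceptional G h rho e1 -> exceptional G h rho e2 -> e1 <> e2 ->
  is_line G h rho l1 -> is_line G h rho l2 -> l1 <> l2 ->
  (two_admissible G h -> bform G l1 l2 = 0 \/ bform G l1 l2 = 1) /\
  (one_admissible G h -> bform G l1 e1 = 0 \/ bform G l1 e1 = 1) /\
  (bform G e1 e2 = 0 \/ bform G e1 e2 = 1).
Proof.
move=> pol wc ex1 ex2 ne12 ln1 ln2 nl.
have GT := pol_sym pol.
have hh : 0 < bform G h h by case: pol => _ [].
have ex1' := ex1; have ex2' := ex2.
case: ex1' => [pr1 [x1 [x1e1 x1pos]]]; case: ex2' => [pr2 [x2 [x2e2 x2pos]]].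
have [[e1e1 e1h] rho1] := pr1; have [[e2e2 e2h] rho2] := pr2.
have [[l1l1 l1h] l1ex] := ln1; have [[l2l2 l2h] l2ex] := ln2.
split; [|split].
-
  move=> [h4 adm]; set k := bform G l1 l2.
  have c1 : -2 < k.
    rewrite ltNge; apply/negP => kle.
    have dh : bform G (l1 - l2) h = 0 by rewrite bBl l1h l2h subrr.
    have [dle deq] := Kint pol dh.
    have dd : bform G (l1 - l2) (l1 - l2) = 0.
      apply/eqP; rewrite eq_le dle /= bexpB // l1l1 l2l2 -/k; lia.
    by have := deq dd => /eqP; rewrite subr_eq0 => /eqP.
  have c2 : k != -1.
    apply/eqP => km1.
    have dr : is_root G h 0 (l1 - l2).
      by split; [rewrite bexpB // -/k km1 l1l1 l2l2 | rewrite bBl l1h l2h subrr].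
    move: (wc _ dr); rewrite neq_lt => /orP[dneg|dpos].
      have dr' : pos_root G h rho (l2 - l1).
        split; last by rewrite bformQ_B; rewrite bformQ_B in dneg; lra.
        by split; [rewrite bexpB // (bsym l2 l1) // -/k km1 l1l1 l2l2 | rewrite bBl l1h l2h subrr].
      have := line_pos pol wc l2ex dr'.
      by rewrite bBr // l2l2 (bsym l2 l1) // -/k km1.
    have := line_pos pol wc l1ex (conj dr dpos).
    by rewrite bBr // l1l1 -/k km1.
  have c3 : k != 2.
    apply/eqP => k2; have [_ +] := adm (l1 + l2); apply.
    by split; [rewrite bexpD // -/k k2 l1l1 l2l2; lia | rewrite bDl l1h l2h; lia].
  have c4 : k < 3.
    rewrite ltNge; apply/negP => k3.
    have := Hodge (l1 + l2) pol.
    rewrite bexpD // bDl l1h l2h l1l1 l2l2 -/k.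
    set H := bform G h h in h4 *.
    move=> hd; have : (2 * k - 4) * H >= 2 * H.
      by rewrite ler_pM2r ?(lt_le_trans _ h4) //; lia.
    move: hd; rewrite (_ : -2 + 2 * k + -2 = 2 * k - 4); last by ring.
    move=> hd hd2; lia.
  lia.
-
  move=> adm; set k := bform G l1 e1.
  have k0 : 0 <= k by apply: l1ex.
  have c3 : k != 2.
    apply/eqP => k2; apply: (adm (l1 + e1)).
    by split; [rewrite bexpD // -/k k2 l1l1 e1e1; lia | rewrite bDl l1h e1h; lia].
  have c4 : k < 3.
    rewrite ltNge; apply/negP => k3.
    have := Hodge (l1 + e1) pol.
    rewrite bexpD // bDl l1h e1h l1l1 e1e1 -/k.
    set H := bform G h h in hh *.
    move=> hd; have : (2 * k - 4) * H >= 2 * H.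
      by rewrite ler_pM2r //; lia.
    move: hd; rewrite (_ : -2 + 2 * k + -2 = 2 * k - 4); last by ring.
    move=> hd hd2; lia.
  lia.
-
  set k := bform G e1 e2.
  have c1 : -2 < k.
    rewrite ltNge; apply/negP => kle.
    have dh : bform G (e1 - e2) h = 0 by rewrite bBl e1h e2h subrr.
    have [dle deq] := Kint pol dh.
    have dd : bform G (e1 - e2) (e1 - e2) = 0.
      apply/eqP; rewrite eq_le dle /= bexpB // e1e1 e2e2 -/k; lia.
    by have := deq dd => /eqP; rewrite subr_eq0 => /eqP.
  have e1nz : e1 <> 0 by move=> e; move: e1e1; rewrite e /bform mul0mx mul0mx mxE.
  have e2nz : e2 <> 0 by move=> e; move: e2e2; rewrite e /bform mul0mx mul0mx mxE.
  have c2 : k != -1.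
    apply/eqP => km1.
    have dr : is_root G h 0 (e2 - e1).
      by split; [rewrite bexpB // (bsym e2 e1) // -/k km1 e1e1 e2e2 | rewrite bBl e1h e2h subrr].
    have x1e2 : 0 < bformQ G x1 e2 by apply: x1pos => // e; apply: ne12.
    have x2e1 : 0 < bformQ G x2 e1 by apply: x2pos => // e; apply: ne12.
    move: (wc _ dr); rewrite neq_lt => /orP[dneg|dpos].
      have dr' : pos_root G h rho (e1 - e2).
        split; last by rewrite bformQ_B; rewrite bformQ_B in dneg; lra.
        by split; [rewrite bexpB // -/k km1 e1e1 e2e2 | rewrite bBl e1h e2h subrr].
      have : 0 < bformQ G x1 (e1 - e2).
        apply: x1pos => // e; apply: e2nz; apply/eqP; move: e => /eqP.
        by rewrite subr_eq addrC -subr_eq subrr eq_sym.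
      by rewrite bformQ_B x1e1; lra.
    have : 0 < bformQ G x2 (e2 - e1).
      apply: x2pos; first exact: (conj dr dpos).
      move=> e; apply: e1nz; apply/eqP; move: e => /eqP.
      by rewrite subr_eq addrC -subr_eq subrr eq_sym.
    by rewrite bformQ_B x2e2; lra.
  have c3 : k != 2.
    apply/eqP => k2.
    have dh : bform G (e1 + e2) h = 0 by rewrite bDl e1h e2h addr0.
    have [_ deq] := Kint pol dh.
    have := deq ltac:(by rewrite bexpD // -/k k2 e1e1 e2e2).
    move/eqP; rewrite addr_eq0 => /eqP e.
    by move: rho1; rewrite e bformQ_N; lra.
  have c4 : k < 3.
    rewrite ltNge; apply/negP => k3.
    have dh : bform G (e1 + e2) h = 0 by rewrite bDl e1h e2h addr0.
    have [dle _] := Kint pol dh.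
    by move: dle; rewrite bexpD // -/k e1e1 e2e2; lia.
  lia.
Qed.
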